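(* Let $k\ge 0$, $n\ge 1$, let $G\sim\mathcal G_n^k$ and let $E$ be the number of edges of $G$. Then $\mathbb E[E]=\binom n2$ for $n\le k+2$, and for $n\ge k+3$ $$\mathbb E[E]=\frac12(k+1)\left(4n-3k-6-2(k+2)\sum_{l=k+3}^{n}\frac1l\right)=(k+1)(2n-o(n)).$$ Moreover, for every $t\ge 0$, $$\mathbb P\big(|E-\mathbb E[E]|>(k+1)t\big)\le 2\exp\left(-\frac{2t^2}{n}\right).$$
   Context: A semi-bar $k$-visibility representation is a finite collection of pairwise disjoint closed horizontal segments (bars) in the plane whose left endpoints all lie on one common vertical line; two bars are adjacent if there is a vertical segment with endpoints on the two bars intersecting at most $k$ other bars; the semi-bar $k$-visibility graph has one vertex per bar. $\mathcal G_n^k$ is the distribution of the random semi-bar $k$-visibility graph on $n$ vertices obtained from $n$ bars at $n$ distinct heights whose left endpoints lie at $x=0$ and whose right endpoints are drawn i.i.d. uniformly from $(0,1)$ (equivalently, the relative order of the bar lengths from top to bottom is a uniformly random permutation in $S_n$). *)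

(* Defs.v *)
From mathcomp Require Import all_boot all_order all_algebra all_fingroup.
From mathcomp Require Import all_classical all_reals all_analysis.
Set Implicit Arguments. Unset Strict Implicit. Unset Printing Implicit Defensive.
Import Order.TTheory GRing.Theory Num.Theory.

(* Discrete model of G_n^k: bars indexed by their height rank i : 'I_n
   (i = 0 topmost), all with left endpoint at x = 0; the bar at rank i has
   right endpoint (s i).+1 in {1,..,n}, where s is a permutation of 'I_n.
   Only the relative order of lengths matters, and a uniform s is the
   uniform relative order of n i.i.d. Uniform(0,1) lengths. *)

Definition between n (i j m : 'I_n) : bool :=
  (minn i j < m) && (m < maxn i j).

(* The vertical segment at abscissa x joining bars i and j exists iff
   x <= min(length i, length j), and it intersects the intermediate bar m
   iff x <= length m (bars are closed).  Since the number of bars hit is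
   monotone in x and lengths are integers, quantifying over integer
   abscissae x in {0,..,n} is the same as quantifying over real x >= 0. *)
Definition sbvis_adj n (k : nat) (s : {perm 'I_n}) (i j : 'I_n) : bool :=
  (i != j) &&
  [exists x : 'I_n.+1,
     (x <= minn (s i).+1 (s j).+1) &&
     (#|[set m : 'I_n | between i j m && (x <= (s m).+1)]| <= k)].

Definition num_edges n (k : nat) (s : {perm 'I_n}) : nat :=
  #|[set p : 'I_n * 'I_n | (p.1 < p.2) && sbvis_adj k s p.1 p.2]|.

Definition expect_edges (R : realType) n (k : nat) : R :=
  ((\sum_(s : {perm 'I_n}) (num_edges k s)%:R) / (n`!)%:R)%R.

Definition prob_dev (R : realType) n (k : nat) (t : R) : R :=
  ((#|[set s : {perm 'I_n} |
        ((k.+1)%:R * t < `|(num_edges k s)%:R - expect_edges R n k|)%R]|)%:R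
   / (n`!)%:R)%R.

(* Main.v *)
Require Import Defs.
From mathcomp Require Import all_boot all_order all_algebra all_fingroup.
From mathcomp Require Import all_classical all_reals all_analysis.
Import Order.TTheory GRing.Theory Num.Theory.
Import numFieldNormedType.Exports.
From mathcomp Require Import ring lra zify.
Set Implicit Arguments. Unset Strict Implicit. Unset Printing Implicit Defensive.

Section RankCount.
Variables (T : finType) (r : rel T).
Hypothesis r_irr : irreflexive r.
Hypothesis r_tr : transitive r.
Hypothesis r_tot : forall x y, x != y -> r x y || r y x.

Definition rk (S : {set T}) y := #|[set m in S | r m y]|.

Lemma rank_count k (S : {set T}) :
  #|[set y in S | rk S y <= k]| = minn k.+1 #|S|.
Proof.
suff H : forall m (S : {set T}), #|S| = m -> #|[set y in S | rk S y <= k]| = minn k.+1 m by exact: H.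
move=> {S}; elim=> [|m IH] S hS.
  rewrite minn0; apply/eqP; rewrite -leqn0 -hS; apply: subset_leq_card.
  by apply/fintype.subsetP=> y; rewrite inE => /andP[].
case: (set_0Vmem S) => [S0|[y0 Hy0]]; first by rewrite S0 cards0 in hS.
pose y1 := [arg max_(y > y0 in S) rk S y].
have [Hy1 Hmax] : y1 \in S /\ forall y, y \in S -> rk S y <= rk S y1.
  by rewrite /y1; case: arg_maxnP => // y Hy H; split.
have nr1 : forall m', m' \in S -> r y1 m' = false.
  move=> m' Hm'; apply/negP => hr.
  have : rk S y1 < rk S m'.
    apply: proper_card; apply/properP; split.
      apply/fintype.subsetP => z; rewrite !inE => /andP[-> hz] /=; exact: r_tr hz hr.
    by exists y1; rewrite !inE ?Hy1 ?hr ?r_irr.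
  by rewrite ltnNge Hmax.
set S' := S :\ y1.
have hS' : #|S'| = m by move: hS; rewrite (cardsD1 y1 S) Hy1 add1n => -[].
have rkE : forall y, y \in S' -> rk S y = rk S' y.
  move=> y; rewrite !inE => /andP[ny Hy]; rewrite /rk; apply: eq_card => z.
  rewrite !inE; case: (eqVneq z y1) => [->|]; last by [].
  by rewrite Hy1 nr1.
have rk1 : rk S y1 = m.
  rewrite -hS' /rk; apply: eq_card => z; rewrite !inE.
  case: (eqVneq z y1) => [->|nz]; first by rewrite r_irr andbF.
  case Hz: (z \in S) => //=.
  by move: (r_tot nz); rewrite nr1 // orbF.
rewrite (cardsD1 y1) inE Hy1 rk1 /=.
have -> : [set y in S | rk S y <= k] :\ y1 = [set y in S' | rk S' y <= k].
  apply/setP => z; rewrite !inE; case: (eqVneq z y1) => //= nz.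
  case Hz: (z \in S) => //=; rewrite rkE // !inE nz Hz.
try done. rewrite IH //; case: (leqP m k) => hm /=; lia.
Qed.
End RankCount.

Lemma card_sumE (T : finType) (P : pred T) :
  #|[set y | P y]| = \sum_(y : T) (P y : nat).
Proof.
rewrite -sum1_card big_mkcond /=; apply: eq_bigr => y _; rewrite inE.
by case: (P y).
Qed.

Section Edges.
Variables (k n : nat) (s : {perm 'I_n}).

Definition Lc (x : 'I_n) : nat := \sum_(y : 'I_n) ((y < x) && (s x < s y)).
Definition Rc (x : 'I_n) : nat := \sum_(y : 'I_n) ((x < y) && (s x < s y)).
Definition Fk : nat := \sum_(x : 'I_n) (minn k.+1 (Lc x) + minn k.+1 (Rc x)).

Lemma adjE (i j : 'I_n) : i < j ->
  sbvis_adj k s i j =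
  (#|[set m : 'I_n | [&& i < m, m < j & minn (s i) (s j) < s m]]| <= k).
Proof.
move=> ij.
have betw m : between i j m = (i < m) && (m < j).
  by rewrite /between (minn_idPl (ltnW ij)) (maxn_idPr (ltnW ij)).
have neij : i != j by apply/eqP => e; rewrite e ltnn in ij.
rewrite /sbvis_adj neij /=.
apply/existsP/idP.
  case=> x /andP[hx hc]; apply: leq_trans hc; apply: subset_leq_card.
  apply/fintype.subsetP => m; rewrite !inE betw => /and3P[-> -> hm] /=.
  by apply: leq_trans hx _; rewrite minnSS ltnS ltnW.
have hlt : (minn (s i) (s j)).+1 < n.+1 by rewrite ltnS gtn_min ltn_ord.
move=> hB; exists (inord (minn (s i) (s j)).+1); rewrite inordK // minnSS leqnn /=.
apply: leq_trans hB; apply: eq_leq; apply: eq_card => m.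
rewrite !inE betw ltnS.
case: (boolP (i < m)) => //= im; case: (boolP (m < j)) => //= mj.
have nmi : s m != s i.
  by rewrite (inj_eq perm_inj); apply/eqP => e; rewrite e ltnn in im.
have nmj : s m != s j.
  by rewrite (inj_eq perm_inj); apply/eqP => e; rewrite e ltnn in mj.
rewrite leq_eqVlt; case: (eqVneq (minn (s i) (s j)) (s m)) => //= e.
case: (leqP (s i) (s j)) e => h e.
  by move: nmi; rewrite -val_eqE /= e eqxx.
by move: nmj; rewrite -val_eqE /= e eqxx.
Qed.


Definition ordlt (a b : 'I_n) := (a < b)%N.
Definition ordgt (a b : 'I_n) := (b < a)%N.

Lemma ordlt_tot (x y : 'I_n) : x != y -> ordlt x y || ordlt y x.
Proof. by rewrite /ordlt -val_eqE /= neq_ltn. Qed.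
Lemma ordgt_tot (x y : 'I_n) : x != y -> ordgt x y || ordgt y x.
Proof. by rewrite /ordgt -val_eqE /= neq_ltn orbC. Qed.
Lemma ordlt_irr : irreflexive ordlt. Proof. by move=> x; rewrite /ordlt ltnn. Qed.
Lemma ordgt_irr : irreflexive ordgt. Proof. by move=> x; rewrite /ordgt ltnn. Qed.
Lemma ordlt_tr : transitive ordlt. Proof. by move=> x y z; exact: ltn_trans. Qed.
Lemma ordgt_tr : transitive ordgt.
Proof. by move=> x y z h1 h2; exact: ltn_trans h2 h1. Qed.

Lemma sumT1 (i : 'I_n) :
  \sum_(j : 'I_n) ([&& i < j, s i < s j &
     #|[set m : 'I_n | [&& i < m, m < j & s i < s m]]| <= k] : nat)
  = minn k.+1 (Rc i).
Proof.
pose Sr := [set y : 'I_n | (i < y) && (s i < s y)].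
have -> : Rc i = #|Sr| by rewrite card_sumE.
rewrite -(rank_count ordlt_irr ordlt_tr ordlt_tot) card_sumE.
apply: eq_bigr => j _; rewrite !inE.
case: (boolP (i < j)) => //= ij; case: (boolP (s i < s j)) => //= sij.
congr (nat_of_bool (_ <= k)); apply: eq_card => m; rewrite !inE /ordlt.
by case: (i < m); case: (s i < s m); case: (m < j).
Qed.

Lemma sumT2 (j : 'I_n) :
  \sum_(i : 'I_n) ([&& i < j, s j < s i &
     #|[set m : 'I_n | [&& i < m, m < j & s j < s m]]| <= k] : nat)
  = minn k.+1 (Lc j).
Proof.
pose Sl := [set y : 'I_n | (y < j) && (s j < s y)].
have -> : Lc j = #|Sl| by rewrite card_sumE.
rewrite -(rank_count ordgt_irr ordgt_tr ordgt_tot) card_sumE.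
apply: eq_bigr => i _; rewrite !inE.
case: (boolP (i < j)) => //= ij; case: (boolP (s j < s i)) => //= sij.
congr (nat_of_bool (_ <= k)); apply: eq_card => m; rewrite !inE /ordgt.
by case: (i < m); case: (s j < s m); case: (m < j).
Qed.

Lemma num_edgesE : num_edges k s = Fk.
Proof.
rewrite /num_edges card_sumE.
rewrite -(pair_bigA _ (fun i j : 'I_n => ((i < j) && sbvis_adj k s i j : nat))) /=.
have split_ij (i j : 'I_n) : ((i < j) && sbvis_adj k s i j : nat) =
   ([&& i < j, s i < s j &
     #|[set m : 'I_n | [&& i < m, m < j & s i < s m]]| <= k] : nat) +
   ([&& i < j, s j < s i &
     #|[set m : 'I_n | [&& i < m, m < j & s j < s m]]| <= k] : nat).
  case: (boolP (i < j)) => //= ij; rewrite adjE //.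
  case: (ltngtP (s i) (s j)) => h /=.
  - by rewrite addn0.
  - by [].
  - by move: h => /val_inj /perm_inj e; rewrite e ltnn in ij.
under eq_bigr do under eq_bigr do rewrite split_ij.
under eq_bigr do rewrite big_split /=.
rewrite big_split /= [X in _ + X]exchange_big /=.
under eq_bigr do rewrite sumT1.
under [X in _ + X]eq_bigr do rewrite sumT2.
by rewrite /Fk big_split /= addnC.
Qed.

End Edges.

Lemma sum_ltp m p : \sum_(i < m) (i < p : nat) = minn m p.
Proof.
elim: m => [|m IH]; first by rewrite big_ord0 min0n.
by rewrite big_ord_recr /= IH; case: (ltnP m p) => h /=; lia.
Qed.

Lemma sum_gtp m p : \sum_(i < m) (p < i : nat) = m - p.+1.
Proof.
elim: m => [|m IH]; first by rewrite big_ord0.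
by rewrite big_ord_recr /= IH; case: (ltnP p m) => h /=; lia.
Qed.

Lemma lift_ltE n (p : 'I_n.+1) (a b : 'I_n) : (lift p a < lift p b) = (a < b).
Proof. by rewrite /= !ltnNge leq_bump2. Qed.

Lemma Fk_lift k n (p : 'I_n.+1) (s : {perm 'I_n}) :
  Fk k (lift_perm p ord0 s) = minn k.+1 p + minn k.+1 (n - p) + Fk k s.
Proof.
set t := lift_perm p ord0 s.
have tp : t p = ord0 by rewrite /t lift_perm_id.
have tl y : t (lift p y) = lift ord0 (s y) by rewrite /t lift_perm_lift.
have h0 y : (t p < t y) = (y != p).
  case: (unliftP p y) => [y'|] ->; last by rewrite ltnn eqxx.
  by rewrite tp tl /= lift_eqF.
have Lp : Lc t p = p.
  rewrite /Lc -[RHS](minn_idPr (ltnW (ltn_ord p))) -sum_ltp.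
  apply: eq_bigr => y _; rewrite h0; case: (boolP (y < p)) => //= yp.
  suff -> : y != p by [].
  by apply/eqP => e; rewrite e ltnn in yp.
have Rp : Rc t p = n - p.
  rewrite /Rc -[n - p]/(n.+1 - p.+1) -sum_gtp.
  apply: eq_bigr => y _; rewrite h0; case: (boolP (p < y)) => //= yp.
  suff -> : y != p by [].
  by apply/eqP => e; rewrite e ltnn in yp.
have Ll y : Lc t (lift p y) = Lc s y.
  rewrite /Lc (bigD1_ord p) //= tp tl ltn0 andbF add0n.
  by apply: eq_bigr => z _; rewrite !tl !lift_ltE.
have Rl y : Rc t (lift p y) = Rc s y.
  rewrite /Rc (bigD1_ord p) //= tp tl ltn0 andbF add0n.
  by apply: eq_bigr => z _; rewrite !tl !lift_ltE.
rewrite /Fk (bigD1_ord p) //= Lp Rp.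
congr (_ + _); apply: eq_bigr => y _; by rewrite Ll Rl.
Qed.

Lemma sum_perm_lift (V : nmodType) n (G : {perm 'I_n.+1} -> V) :
  (\sum_(s : {perm 'I_n.+1}) G s =
   \sum_(p : 'I_n.+1) \sum_(s : {perm 'I_n}) G (lift_perm p ord0 s))%R.
Proof.
rewrite (partition_big (fun s : {perm 'I_n.+1} => (s^-1)%g ord0) xpredT) //=.
apply: eq_bigr => p _.
rewrite (reindex (lift_perm p ord0)); last first.
  pose ulsf i (s : {perm 'I_n.+1}) k := odflt k (unlift (s i) (s (lift i k))).
  have ulsfK i (s : {perm 'I_n.+1}) k: lift (s i) (ulsf i s k) = s (lift i k).
    rewrite /ulsf; have:= neq_lift i k.
    by rewrite -(can_eq (permK s)) => /unlift_some[] ? ? ->.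
  have inj_ulsf: injective (ulsf p _).
    move=> s; apply: can_inj (ulsf (s p) s^-1%g) _ => k'.
    by rewrite {1}/ulsf ulsfK !permK liftK.
  exists (fun s => perm (inj_ulsf s)) => [s _ | s].
    by apply/permP=> k'; rewrite permE /ulsf lift_perm_lift lift_perm_id liftK.
  rewrite inE => /eqP si0'.
  have si0 : s p = ord0 by rewrite -si0' permKV.
  apply/permP=> k.
  case: (unliftP p k) => [k'|] ->; rewrite ?lift_perm_id //.
  by rewrite lift_perm_lift -si0 permE ulsfK.
by apply: eq_bigl => s'; rewrite lift_permV lift_perm_id eqxx.
Qed.

Local Open Scope classical_set_scope.
Local Open Scope ring_scope.

Section H.
Variable R : realType.

Lemma conv_exp (u y : R) : 0 <= u -> u <= 1 -> expR (u * y) <= 1 - u + u * expR y.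
Proof.
move=> u0 u1.
have P : Itv.spec (@Itv.num_sem R) (Itv.Real `[0%Z, 1%Z]) u.
  by rewrite /= /Itv.num_sem /= in_itv /= u0 u1 (ger0_real u0).
pose t : {i01 R} := Itv.Def P.
have := convex_expR t y 0.
by rewrite !convRE /= mulr0 addr0 expR0 mulr1 /unstable.onem addrC.
Qed.


Lemma mono_le (f df : R -> R) (a b : R) : (forall x : R, is_derive x (1:R) f (df x)) ->
  (forall x, a < x < b -> df x <= 0) -> a <= b -> f b <= f a.
Proof.
move=> D N ab.
apply: (@ler0_derive1_nincr R f a b) => //.
- by move=> x; rewrite in_itv /= => hx; rewrite derive1E; case: (D x) => _ ->; exact: N.
- by apply: derivable_within_continuous => x _; case: (D x) => ?.
Qed.

Lemma mono_ge (f df : R -> R) (a b : R) : (forall x : R, is_derive x (1:R) f (df x)) ->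
  (forall x, a < x < b -> 0 <= df x) -> a <= b -> f a <= f b.
Proof.
move=> D N ab.
apply: (@ger0_derive1_ndecr R f a b) => //.
- by move=> x; rewrite in_itv /= => hx; rewrite derive1E; case: (D x) => _ ->; exact: N.
- by apply: derivable_within_continuous => x _; case: (D x) => ?.
Qed.

Section TwoPoint.
Variable p : R.
Hypothesis p0 : 0 <= p.
Hypothesis p1 : p <= 1.

Let A (h : R) := 1 - p + p * expR h.

Let A_gt0 h : 0 < A h.
Proof.
rewrite /A; have [->|pn1] := eqVneq p 1; first by rewrite subrr add0r mul1r expR_gt0.
have : 0 < 1 - p by rewrite subr_gt0 lt_neqAle pn1 p1.
by move=> h1; apply: (lt_le_trans h1); rewrite lerDl mulr_ge0 // expR_ge0.
Qed.

Let dA (h : R) : is_derive h (1:R) A (p * expR h).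
Proof. apply: is_derive_eq; by rewrite add0r mul1r. Qed.

Let phi (h : R) := (1 - p) - (1 - p) * (A h)^-1 - h / 4.
Let dphi (h : R) := (1 - p) * (p * expR h) / (A h ^+ 2) - 1 / 4.

Let phi_der (h : R) : is_derive h (1:R) phi (dphi h).
Proof.
have hV := is_deriveV (lt0r_neq0 (A_gt0 h)) (dA h).
rewrite /phi; apply: is_derive_eq.
rewrite /dphi; have := lt0r_neq0 (A_gt0 h); set a := A h => an0.

rewrite /GRing.scale /=.
by field.
Qed.

Let phi0 : phi 0 = 0.
Proof. by rewrite /phi /A expR0 mulr1 subrK invr1 mulr1 subrr mul0r subr0. Qed.

Let dphi_le0 h : dphi h <= 0.
Proof.
rewrite /dphi subr_le0 ler_pdivrMr; last by rewrite exprn_gt0 // A_gt0.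
have hb : 0 <= p * expR h by rewrite mulr_ge0 // expR_ge0.
rewrite /A; set b := p * expR h.
have := sqr_ge0 (1 - p - b); nra.
Qed.

Let phi_le0 h : 0 <= h -> phi h <= 0.
Proof.
move=> h0; rewrite -phi0; apply: (mono_le phi_der) => // x _; exact: dphi_le0.
Qed.

Let phi_ge0 h : h <= 0 -> 0 <= phi h.
Proof.
move=> h0; rewrite -phi0; apply: (mono_le phi_der) => // x _; exact: dphi_le0.
Qed.

Let g (y : R) := - (y ^+ 2 / 8 + p * y).
Let r (y : R) := A y * (expR \o g) y.
Let dr (y : R) := expR (g y) * A y * phi y.

Let r_der (h : R) : is_derive h (1:R) r (dr h).
Proof.
have dg : is_derive h (1:R) g (- (h / 4 + p)).
  rewrite /g; apply: is_derive_eq; rewrite /GRing.scale /=; by field.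
have dE := is_derive1_comp (is_derive_expR (g h)) dg.
have := is_deriveM (dA h) dE.
move=> H; apply: (is_derive_eq H).
rewrite /dr /phi /GRing.scale /=.
have := lt0r_neq0 (A_gt0 h); rewrite /A => an0.
field. exact: an0.
Qed.

Let r0 : r 0 = 1.
Proof.
by rewrite /r /g /A /= expR0 mulr1 subrK expr2 !mul0r mulr0 addr0 oppr0 expR0 mulr1.
Qed.

Let r_le1 h : r h <= 1.
Proof.
rewrite -r0; case: (leP 0 h) => h0.
  apply: (mono_le r_der) => // x /andP[x0 _].
  rewrite /dr -mulrA mulr_ge0_le0 ?expR_ge0 // mulr_ge0_le0 ?(ltW (A_gt0 _)) //.
  exact: phi_le0 (ltW x0).
apply: (mono_ge r_der) (ltW h0) => x /andP[_ x0].
rewrite /dr mulr_ge0 ?mulr_ge0 ?expR_ge0 ?(ltW (A_gt0 _)) //.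
exact: phi_ge0 (ltW x0).
Qed.

Lemma hoeffding2 h :
  (1 - p) * expR (- (p * h)) + p * expR ((1 - p) * h) <= expR (h ^+ 2 / 8).
Proof.
have E1 : (1 - p) * expR (- (p * h)) + p * expR ((1 - p) * h) =
          r h * expR (h ^+ 2 / 8).
  rewrite /r /g /A /= -mulrA -expRD.
  have -> : (1 - p) * h = h + - (p * h) by ring.
  have -> : - (h ^+ 2 / 8 + p * h) + h ^+ 2 / 8 = - (p * h) by ring.
  rewrite expRD; ring.
rewrite E1 -[X in _ <= X]mul1r ler_wpM2r ?expR_ge0 //.
Qed.

End TwoPoint.

Lemma hoeffding_sum N (a : 'I_N -> R) (lo c lam : R) : (0 < N)%N -> 0 <= c ->
  (forall i, lo <= a i <= lo + c) ->
  \sum_i expR (lam * (a i - (\sum_j a j) / N%:R)) <=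
    N%:R * expR (lam ^+ 2 * c ^+ 2 / 8).
Proof.
move=> N0 c0 ha.
set m := (\sum_j a j) / N%:R.
have NR : N%:R != 0 :> R by rewrite pnatr_eq0 -lt0n.
have NRp : 0 < N%:R :> R by rewrite ltr0n.
have sumA : \sum_j a j = N%:R * m by rewrite /m mulrC divfK.
case: (eqVneq c 0) => [c_0 | cn0].
  have ai i : a i = lo.
    by move: (ha i); rewrite c_0 addr0 => /andP[h1 h2]; apply/le_anti; rewrite h1 h2.
  have mlo : m = lo.
    by rewrite /m (eq_bigr (fun _ => lo)) // sumr_const card_ord -[lo *+ N]mulr_natl mulrAC divff // mul1r.
  rewrite c_0 expr0n /= mulr0 mul0r expR0 mulr1 (eq_bigr (fun _ => 1)) ?sumr_const ?card_ord //.
  by move=> i _; rewrite ai mlo subrr mulr0 expR0.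
have cp : 0 < c by rewrite lt_neqAle eq_sym cn0 c0.
have mlo : lo <= m.
  rewrite -(ler_pM2l NRp) -sumA.
  have -> : N%:R * lo = \sum_(j < N) lo by rewrite sumr_const card_ord mulr_natl.
  by apply: ler_sum => i _; case/andP: (ha i).
have mhi : m <= lo + c.
  rewrite -(ler_pM2l NRp) -sumA.
  have -> : N%:R * (lo + c) = \sum_(j < N) (lo + c) by rewrite sumr_const card_ord mulr_natl.
  by apply: ler_sum => i _; case/andP: (ha i).
set h := lam * c.
set p := (m - lo) / c.
have p0 : 0 <= p by rewrite /p divr_ge0 // subr_ge0.
have p1 : p <= 1 by rewrite /p ler_pdivrMr // mul1r lerBlDl.
pose u i := (a i - lo) / c.
have term i : expR (lam * (a i - m)) <= expR (- (p * h)) * (1 - u i + u i * expR h).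
  have -> : lam * (a i - m) = - (p * h) + u i * h by rewrite /p /h /u; field.
  rewrite expRD ler_wpM2l ?expR_ge0 //; apply: conv_exp.
    by rewrite /u divr_ge0 // subr_ge0; case/andP: (ha i).
  by rewrite /u ler_pdivrMr // mul1r lerBlDl; case/andP: (ha i).
apply: (le_trans (ler_sum _ (fun i _ => term i))).
have su : \sum_i u i = N%:R * p.
  rewrite /u -mulr_suml sumrB sumA sumr_const card_ord /p -mulr_natl; field; exact: cn0.
rewrite -mulr_sumr big_split /= sumrB -(mulr_suml _ _ u) su sumr_const card_ord.
have E : expR (- (p * h)) * (1 *+ N - N%:R * p + N%:R * p * expR h) =
   N%:R * ((1 - p) * expR (- (p * h)) + p * expR ((1 - p) * h)).
  have -> : (1 - p) * h = h + - (p * h) by ring.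
  rewrite expRD -mulr_natl; ring.
rewrite E ler_wpM2l ?ler0n //.
have -> : lam ^+ 2 * c ^+ 2 = h ^+ 2 by rewrite /h exprMn.
exact: hoeffding2.
Qed.

End H.

Section Main.
Variables (R : realType) (k : nat).

Definition hg (n p : nat) : nat := (minn k.+1 p + minn k.+1 (n - p))%N.
Definition Sm n : R := \sum_(s : {perm 'I_n}) (Fk k s)%:R.
Definition Ex n : R := Sm n / (n`!)%:R.
Definition Dg (g : nat) : R := (\sum_(p < g.+1) (hg g p)%:R) / (g.+1)%:R.

Lemma expectE n : expect_edges R n k = Ex n.
Proof.
by rewrite /expect_edges /Ex /Sm; congr (_ / _); apply: eq_bigr => s _; rewrite num_edgesE.
Qed.

Lemma fact_neq0 n : (n`!)%:R != 0 :> R.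
Proof. by rewrite pnatr_eq0 -lt0n fact_gt0. Qed.

Lemma Sm_rec n : Sm n.+1 = (n`!)%:R * (\sum_(p < n.+1) (hg n p)%:R) + (n.+1)%:R * Sm n.
Proof.
rewrite /Sm sum_perm_lift.
under eq_bigr do under eq_bigr do rewrite Fk_lift natrD.
under eq_bigr do rewrite big_split /= sumr_const card_Sn.
rewrite big_split /= sumr_const card_ord mulr_sumr; congr (_ + _).
  by apply: eq_bigr => p _; rewrite /hg mulr_natl.
by rewrite mulr_natl.
Qed.

Lemma Ex_rec n : Ex n.+1 = Ex n + Dg n.
Proof.
rewrite /Ex /Dg Sm_rec factS natrM.
have h1 := fact_neq0 n.
have h2 : (n.+1)%:R != 0 :> R by rewrite pnatr_eq0.
by field; rewrite h1 andbT addrC natr1.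
Qed.

Lemma Ex0 : Ex 0 = 0.
Proof.
rewrite /Ex /Sm (eq_bigr (fun _ => 0)) ?big1 ?mul0r // => s _.
by rewrite /Fk big_ord0.
Qed.

Lemma sum_min g : (2 * \sum_(p < g.+1) minn k.+1 p =
  if (g <= k.+1)%N then g * g.+1 else k.+1 * k.+2 + 2 * k.+1 * (g - k.+1))%N.
Proof.
elim: g => [|g IH]; first by rewrite big_ord_recr big_ord0.
rewrite big_ord_recr /= mulnDr IH.
case: (leqP g k.+1) => h1; case: (leqP g.+1 k.+1) => h2 //=; nia.
Qed.

Lemma sum_hg g : (\sum_(p < g.+1) hg g p = 2 * \sum_(p < g.+1) minn k.+1 p)%N.
Proof.
rewrite /hg big_split /= mul2n -addnn; congr (_ + _).
rewrite (reindex_inj rev_ord_inj) /=.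
by apply: eq_bigr => p _; rewrite subSS subKn // -ltnS.
Qed.

Lemma Dg_small g : (g <= k.+1)%N -> Dg g = g%:R.
Proof.
move=> h; rewrite /Dg -natr_sum sum_hg sum_min h natrM.
have h2 : (g.+1)%:R != 0 :> R by rewrite pnatr_eq0.
by field.
Qed.

Lemma Dg_big g : (k.+1 <= g)%N ->
  Dg g = 2 * (k.+1)%:R - (k.+1)%:R * (k.+2)%:R / (g.+1)%:R.
Proof.
move=> h; rewrite /Dg -natr_sum sum_hg sum_min.
case: (leqP g k.+1) => h3.
  have -> : g = k.+1 by apply/eqP; rewrite eqn_leq h h3.
  rewrite natrM; have h2 : 1 + (1 + k%:R) != 0 :> R.
    by apply: lt0r_neq0; have := ler0n R k; lra.
  by field.
rewrite natrD !natrM natrB; last exact: ltnW.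
have h2 : 1 + g%:R != 0 :> R by apply: lt0r_neq0; have := ler0n R g; lra.
by field.
Qed.


Lemma bin2_2 n : (2 * 'C(n, 2) = n * n.-1)%N.
Proof.
elim: n => [|n IH]; first by [].
rewrite binS bin1 mulnDr IH; case: n {IH} => [|n] //=; lia.
Qed.

Lemma Ex_small n : (n <= k.+2)%N -> Ex n = ('C(n, 2))%:R.
Proof.
elim: n => [|n IH] hn; first by rewrite Ex0 bin0n.
rewrite Ex_rec IH ?(ltnW hn) // Dg_small // binS bin1 natrD //.
Qed.

Definition Tn (n : nat) : R :=
  2^-1 * (k.+1)%:R *
  (4 * n%:R - 3 * k%:R - 6 - 2 * (k + 2)%:R * \sum_(k + 3 <= l < n.+1) (l%:R)^-1).

Lemma Ex_big n : (k.+2 <= n)%N -> Ex n = Tn n.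
Proof.
move=> /subnK <-; elim: (n - k.+2)%N => [|m IH].
  rewrite add0n Ex_small // /Tn big_geq; last by rewrite addn3.
  have := bin2_2 k.+2; move/(congr1 (fun x : nat => x%:R : R)) => /= e.
  have -> : ('C(k.+2, 2))%:R = (k.+2)%:R * (k.+1)%:R / 2 :> R.
    by rewrite -natrM -e natrM; field.
  rewrite !natrD /=.
  by field.
rewrite addSn Ex_rec IH Dg_big; last by lia.
have -> : Tn (m + k.+2).+1 = 2^-1 * (k.+1)%:R * (4 * (m + k.+2).+1%:R - 3 * k%:R - 6
   - 2 * (k + 2)%:R * (\sum_(k + 3 <= l < (m + k.+2).+1) (l%:R)^-1 + ((m + k.+2).+1%:R)^-1)).
  by rewrite /Tn big_nat_recr //; lia.
rewrite /Tn.
set S := \sum_(_ <= _ < _) _.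
have h2 : 1 + (m + k.+2)%:R != 0 :> R.
  by apply: lt0r_neq0; have := ler0n R (m + k.+2); lra.
rewrite !natrD /= in h2 *.
by field.
Qed.


Lemma mgf n (lam : R) :
  \sum_(s : {perm 'I_n}) expR (lam * ((Fk k s)%:R - Ex n)) <=
  (n`!)%:R * expR (lam ^+ 2 * (k.+1)%:R ^+ 2 * n%:R / 8).
Proof.
elim: n => [|n IH].
  rewrite Ex0 (eq_bigr (fun _ => 1)); last first.
    by move=> s _; rewrite /Fk big_ord0 subrr mulr0 expR0.
  by rewrite sumr_const card_Sn /= mulr0 mul0r expR0 mulr1.
rewrite sum_perm_lift.
have spl (p : 'I_n.+1) (s : {perm 'I_n}) :
  expR (lam * ((Fk k (lift_perm p ord0 s))%:R - Ex n.+1)) =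
  expR (lam * ((hg n p)%:R - Dg n)) * expR (lam * ((Fk k s)%:R - Ex n)).
  rewrite Fk_lift Ex_rec -expRD natrD /hg; congr expR; ring.
under eq_bigr do under eq_bigr do rewrite spl.
under eq_bigr do rewrite -mulr_sumr.
rewrite -mulr_suml.
have H1 : \sum_(p < n.+1) expR (lam * ((hg n p)%:R - Dg n)) <=
          (n.+1)%:R * expR (lam ^+ 2 * (k.+1)%:R ^+ 2 / 8).
  apply: (@hoeffding_sum R n.+1 (fun p : 'I_n.+1 => (hg n p)%:R) (minn n k.+1)%:R) => //.
  move=> p; have hp : (p <= n)%N by rewrite -ltnS ltn_ord.
  rewrite -natrD !ler_nat /hg; apply/andP; split; lia.
apply: le_trans (ler_pM _ _ H1 IH) _.
- by apply: sumr_ge0 => p _; rewrite expR_ge0.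
- by apply: sumr_ge0 => p _; rewrite expR_ge0.
rewrite factS natrM mulrACA -expRD.
suff -> : lam ^+ 2 * (k.+1)%:R ^+ 2 / 8 + lam ^+ 2 * (k.+1)%:R ^+ 2 * n%:R / 8 =
          lam ^+ 2 * (k.+1)%:R ^+ 2 * (n.+1)%:R / 8 by [].
rewrite -natr1; ring.
Qed.

Lemma tail n (lam u : R) (x : {perm 'I_n} -> R) : 0 <= lam ->
  (#|[set s | u < `|x s|]%SET|)%:R <=
  expR (- (lam * u)) * (\sum_s expR (lam * x s) + \sum_s expR (- lam * x s)).
Proof.
move=> l0; rewrite card_sumE natr_sum mulrDr !mulr_sumr -big_split /=.
apply: ler_sum => s _.
have e1 : 0 <= expR (- (lam * u)) * expR (lam * x s) by rewrite mulr_ge0 ?expR_ge0.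
have e2 : 0 <= expR (- (lam * u)) * expR (- lam * x s) by rewrite mulr_ge0 ?expR_ge0.
case: (boolP (u < `|x s|)) => h /=; last by rewrite addr_ge0.
move: h; rewrite ltr_normr => /orP[h|h].
  have h1 : 1 <= expR (- (lam * u)) * expR (lam * x s).
    rewrite -expRD; apply: le_trans (expR_ge1Dx _); rewrite lerDl.
    have -> : - (lam * u) + lam * x s = lam * (x s - u) by ring.
    by rewrite mulr_ge0 // subr_ge0 ltW.
  lra.
have h1 : 1 <= expR (- (lam * u)) * expR (- lam * x s).
  rewrite -expRD; apply: le_trans (expR_ge1Dx _); rewrite lerDl.
  have -> : - (lam * u) + - lam * x s = lam * (- x s - u) by ring.
  by rewrite mulr_ge0 // subr_ge0 ltW.
lra.
Qed.

Lemma prob_bound n (t : R) : (1 <= n)%N -> 0 <= t ->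
  prob_dev n k t <= 2 * expR (- (2 * t ^+ 2) / n%:R).
Proof.
move=> n1 t0.
have nR : 0 < n%:R :> R by rewrite ltr0n.
have cR : 0 < (k.+1)%:R :> R by rewrite ltr0n.
set c := (k.+1)%:R : R.
pose lam := 4 * t / (c * n%:R).
have l0 : 0 <= lam by rewrite /lam divr_ge0 ?mulr_ge0 // ltW // mulr_gt0.
rewrite /prob_dev expectE.
pose x (s : {perm 'I_n}) := (Fk k s)%:R - Ex n.
have -> : [set s : {perm 'I_n} | c * t < `|(num_edges k s)%:R - Ex n|]%SET =
          [set s | c * t < `|x s|]%SET.
  by apply/setP => s; rewrite !inE /x num_edgesE.
have fp : 0 < (n`!)%:R :> R by rewrite ltr0n fact_gt0.
rewrite ler_pdivrMr //.
apply: le_trans (tail (c * t) x l0) _.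
have M1 := mgf n lam.
have M2 := mgf n (- lam).
rewrite sqrrN in M2.
have M2' : \sum_s expR (- lam * x s) <=
           (n`!)%:R * expR (lam ^+ 2 * c ^+ 2 * n%:R / 8) by exact: M2.
have M1' : \sum_s expR (lam * x s) <=
           (n`!)%:R * expR (lam ^+ 2 * c ^+ 2 * n%:R / 8) by exact: M1.
apply: le_trans (ler_wpM2l (expR_ge0 _) (lerD M1' M2')) _.
have -> : 2 * expR (- (2 * t ^+ 2) / n%:R) * (n`!)%:R =
   expR (- (lam * (c * t))) * ((n`!)%:R * expR (lam ^+ 2 * c ^+ 2 * n%:R / 8) +
      (n`!)%:R * expR (lam ^+ 2 * c ^+ 2 * n%:R / 8)).
  have ex : expR (- (lam * (c * t))) * expR (lam ^+ 2 * c ^+ 2 * n%:R / 8) =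
            expR (- (2 * t ^+ 2) / n%:R).
    rewrite -expRD; congr expR; rewrite /lam; field.
    rewrite (lt0r_neq0 nR) /=; apply: lt0r_neq0; have := ler0n R k; lra.
  rewrite -ex; ring.
by [].
Qed.


Lemma lim_part :
  (fun n : nat => (2 * n%:R - expect_edges R n k / (k.+1)%:R) / n%:R : R)
     @ \oo --> (0 : R).
Proof.
pose u g : R := 2 - Dg g / (k.+1)%:R.
have cn0 : 1 + k%:R != 0 :> R by apply: lt0r_neq0; have := ler0n R k; lra.
have Su n : 2 * n%:R - Ex n / (k.+1)%:R = \sum_(0 <= g < n) u g.
  elim: n => [|n IH]; first by rewrite Ex0 big_geq // mulr0 mul0r subr0.
  rewrite big_nat_recr //= Ex_rec -IH /u -natr1; by field; rewrite ?cn0.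
have u0 : u @ \oo --> 0.
  rewrite -(cvg_shiftn k.+1).
  have H : [sequence harmonic (n + k.+1)%N]_n @ \oo --> (0 : R).
    by rewrite cvg_shiftn; exact: cvg_harmonic.
  have := cvgM (cvg_cst ((k.+2)%:R : R)) H; rewrite mulr0.
  move=> H2; apply: (cvg_trans _ (H2 _ _)); apply: near_eq_cvg; near=> n => /=.
  rewrite /u Dg_big ?leq_addl //.

  field; repeat (apply/andP; split); apply: lt0r_neq0; have := ler0n R n; have := ler0n R k; lra.
rewrite -cvg_shiftS.
have -> : [sequence (2 * n.+1%:R - expect_edges R n.+1 k / (k.+1)%:R) / n.+1%:R]_n =
          arithmetic_mean u.
  apply/funext => n; rewrite /arithmetic_mean /= expectE Su seriesEnat /= mulrC //.
exact: cesaro u0.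
Unshelve. all: by end_near.
Qed.

End Main.

Unset Implicit Arguments.

Theorem mainTheorem15 (R : realType) (k : nat) :
  (forall n : nat, (1 <= n)%N ->
     ((n <= k + 2)%N -> expect_edges R n k = ('C(n, 2))%:R) /\
     ((k + 3 <= n)%N ->
        expect_edges R n k =
          2^-1 * (k.+1)%:R *
          (4 * n%:R - 3 * k%:R - 6
           - 2 * (k + 2)%:R * \sum_(k + 3 <= l < n.+1) (l%:R)^-1)) /\
     (forall t : R, 0 <= t ->
        prob_dev n k t <= 2 * expR (- (2 * t ^+ 2) / n%:R))) /\
  (* E[E] = (k+1)(2n - o(n)) as n -> oo *)
  ((fun n : nat => (2 * n%:R - expect_edges R n k / (k.+1)%:R) / n%:R : R)
     @ \oo --> (0 : R)).
Proof.
split; last exact: lim_part.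
move=> n n1; split; [|split].
- move=> h; rewrite expectE; apply: Ex_small; lia.
- move=> h; rewrite expectE Ex_big //; lia.
- by move=> t t0; apply: prob_bound.
Qed.
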